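(* Let $\alpha,\beta$ be fixed nonzero real numbers. There exist constants $C,N>0$, independent of $n$ and of the point set, such that for every $n>N$ and every set $P\subset\mathbb R^2$ of $n$ points, $$|\Pi_{\alpha,\beta}(P)|\le C n^2 .$$
   Context: For a finite set $P\subset\mathbb R^2$ and real numbers $\alpha,\beta$, define the set of ordered triples $$\Pi_{\alpha,\beta}(P)=\{(p,q,r)\in P\times P\times P:\ p\cdot q=\alpha \text{ and } p\cdot r=\beta\},$$ where $\cdot$ is the standard dot product on $\mathbb R^2$ (the points $p,q,r$ need not be distinct). *)

(* Defs.v *)
From Stdlib Require Import Reals List.
Import ListNotations.
Open Scope R_scope.

Definition pt := (R * R)%type.

Definition dot (p q : pt) : R := fst p * fst q + snd p * snd q.

Definition triples (P : list pt) : list (pt * pt * pt) :=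
  flat_map (fun p => flat_map (fun q => map (fun r => (p, q, r)) P) P) P.

(* Pi_{alpha,beta}(P) as a list; when P has no duplicates, its length is the
   cardinality of the set of triples. *)
Definition Pi (alpha beta : R) (P : list pt) : list (pt * pt * pt) :=
  filter (fun t => match t with (p, q, r) =>
            if Req_EM_T (dot p q) alpha then
              if Req_EM_T (dot p r) beta then true else false
            else false end) (triples P).

(* Main.v *)
Require Import Defs.
From Stdlib Require Import Reals List Lra Lia Psatz.
Open Scope R_scope.

Fixpoint S {A} (l : list A) (f : A -> nat) : nat :=
  match l with nil => 0%nat | x :: l' => (f x + S l' f)%nat end.

Lemma S_ext {A} (l : list A) f g : (forall x, In x l -> f x = g x) -> S l f = S l g.
Proof. induction l as [|x0 l IHl]; simpl; intros H; [reflexivity|]. rewrite H by auto; rewrite IHl; auto. Qed.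

Lemma S_le {A} (l : list A) f g : (forall x, In x l -> (f x <= g x)%nat) -> (S l f <= S l g)%nat.
Proof. induction l; simpl; [auto|]. intros H. specialize (IHl (fun x h => H x (or_intror h))).
  specialize (H a (or_introl eq_refl)). lia. Qed.

Lemma S_add {A} (l : list A) f g : S l (fun x => f x + g x)%nat = (S l f + S l g)%nat.
Proof. induction l; simpl; [auto|]. rewrite IHl; lia. Qed.

Lemma S_const {A} (l : list A) c : S l (fun _ => c) = (length l * c)%nat.
Proof. induction l; simpl; [auto|]. rewrite IHl; lia. Qed.

Lemma S_exch {A B} (l1 : list A) (l2 : list B) f :
  S l1 (fun x => S l2 (fun y => f x y)) = S l2 (fun y => S l1 (fun x => f x y)).
Proof. induction l1; simpl.
  - induction l2; simpl; auto.
  - rewrite IHl1. rewrite <- S_add. reflexivity. Qed.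

Lemma S_mul {A} (l : list A) m g : S l (fun x => m * g x)%nat = (m * S l g)%nat.
Proof. induction l; simpl; [lia|]. rewrite IHl; lia. Qed.

Lemma S_zero {A} (l : list A) f : (forall x, In x l -> f x = 0%nat) -> S l f = 0%nat.
Proof. intros H. rewrite (S_ext l f (fun _ => 0%nat)) by auto. rewrite S_const; lia. Qed.

Lemma S_uniq {A} (l : list A) f : NoDup l -> (forall x, (f x <= 1)%nat) ->
  (forall x y, In x l -> In y l -> f x <> 0%nat -> f y <> 0%nat -> x = y) -> (S l f <= 1)%nat.
Proof. induction 1 as [|a l Ha Hl IH]; simpl; intros H1 H2; [lia|].
  destruct (Nat.eq_dec (f a) 0) as [E|E].
  - rewrite E. apply IH; [auto|]. intros; apply H2; auto.
  - rewrite S_zero. specialize (H1 a); lia.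
    intros y Hy. destruct (Nat.eq_dec (f y) 0); auto.
    exfalso. assert (a = y) by (apply H2; auto). subst; auto. Qed.

Lemma len_filter_flat {A B} (f : B -> bool) (g : A -> list B) l :
  length (filter f (flat_map g l)) = S l (fun x => length (filter f (g x))).
Proof. induction l; simpl; auto. rewrite filter_app, length_app, IHl; auto. Qed.

Lemma len_filter_map {A B} (f : B -> bool) (h : A -> B) l :
  length (filter f (map h l)) = S l (fun x => if f (h x) then 1%nat else 0%nat).
Proof. induction l; simpl; auto. destruct (f (h a)); simpl; rewrite IHl; auto. Qed.

Ltac dR := repeat match goal with
  | |- context[Req_EM_T ?x ?y] => destruct (Req_EM_T x y)
  | H : context[Req_EM_T ?x ?y] |- _ => destruct (Req_EM_T x y) end.

Section Main.
Variables (a b : R) (ha : a <> 0) (hb : b <> 0).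

Definition ind (p q r : pt) : nat :=
  if Req_EM_T (dot p q) a then if Req_EM_T (dot p r) b then 1%nat else 0%nat else 0%nat.

Lemma ind_le p q r : (ind p q r <= 1)%nat.
Proof. unfold ind; destruct (Req_EM_T (dot p q) a), (Req_EM_T (dot p r) b); lia. Qed.

Lemma ind_spec p q r : ind p q r <> 0%nat -> dot p q = a /\ dot p r = b.
Proof. unfold ind; destruct (Req_EM_T (dot p q) a), (Req_EM_T (dot p r) b); auto; lia. Qed.

Lemma len_Pi P : length (Pi a b P) = S P (fun p => S P (fun q => S P (fun r => ind p q r))).
Proof. unfold Pi, triples. rewrite len_filter_flat. apply S_ext; intros p _.
  rewrite len_filter_flat. apply S_ext; intros q _.
  rewrite len_filter_map. apply S_ext; intros r _. unfold ind.
  destruct (Req_EM_T (dot p q) a), (Req_EM_T (dot p r) b); reflexivity. Qed.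

Definition r0 (q : pt) : pt := (b / a * fst q, b / a * snd q).

Lemma key p q r : dot p q = a -> dot p r = b ->
  fst q * snd r - snd q * fst r = 0 -> r = r0 q.
Proof. destruct p as [p1 p2], q as [q1 q2], r as [s1 s2]; unfold dot, r0; simpl.
  intros H1 H2 H3.
  assert (E1 : s1 * a = b * q1).
  { rewrite <- H1, <- H2. assert (p2 * (s1 * q2 - q1 * s2) = 0) by (rewrite <- (Rmult_0_r p2); f_equal; lra). nra. }
  assert (E2 : s2 * a = b * q2).
  { rewrite <- H1, <- H2. assert (p1 * (q1 * s2 - q2 * s1) = 0) by (rewrite <- (Rmult_0_r p1); f_equal; lra). nra. }
  f_equal; field_simplify_eq; auto; lra. Qed.

Lemma uniq_p p p' q r : dot p q = a -> dot p r = b -> dot p' q = a -> dot p' r = b ->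
  fst q * snd r - snd q * fst r <> 0 -> p = p'.
Proof. destruct p as [p1 p2], p' as [u1 u2], q as [q1 q2], r as [s1 s2]; unfold dot; simpl.
  intros H1 H2 H3 H4 D.
  assert (A1 : (p1 - u1) * (q1 * s2 - q2 * s1) = 0).
  { replace ((p1 - u1) * (q1 * s2 - q2 * s1)) with
      (s2*((p1*q1+p2*q2) - (u1*q1+u2*q2)) - q2*((p1*s1+p2*s2)-(u1*s1+u2*s2))) by ring.
    rewrite H1, H2, H3, H4; ring. }
  assert (A2 : (p2 - u2) * (q1 * s2 - q2 * s1) = 0).
  { replace ((p2 - u2) * (q1 * s2 - q2 * s1)) with
      (q1*((p1*s1+p2*s2)-(u1*s1+u2*s2)) - s1*((p1*q1+p2*q2) - (u1*q1+u2*q2))) by ring.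
    rewrite H1, H2, H3, H4; ring. }
  apply Rmult_integral in A1; apply Rmult_integral in A2.
  destruct A1, A2; try contradiction. f_equal; lra. Qed.

Lemma bound_q P q : NoDup P ->
  (S P (fun r => S P (fun p => ind p q r)) <= 2 * length P)%nat.
Proof. intros ND.
  apply Nat.le_trans with (S P (fun r => 1 + (if Req_EM_T (fst (r0 q)) (fst r) then
      if Req_EM_T (snd (r0 q)) (snd r) then length P else 0 else 0))%nat).
  - apply S_le; intros r Hr.
    destruct (Req_EM_T (fst q * snd r - snd q * fst r) 0) as [D|D].
    + destruct (Req_EM_T (fst (r0 q)) (fst r)) as [E1|E1];
      [destruct (Req_EM_T (snd (r0 q)) (snd r)) as [E2|E2]|].
      * rewrite (S_le _ _ (fun _ => 1%nat)) by (intros; apply ind_le).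
        rewrite S_const; lia.
      * rewrite S_zero; [lia|]. intros p _. destruct (Nat.eq_dec (ind p q r) 0); auto.
        destruct (ind_spec _ _ _ n) as [X Y]. rewrite (key _ _ _ X Y D) in E2; easy.
      * rewrite S_zero; [lia|]. intros p _. destruct (Nat.eq_dec (ind p q r) 0); auto.
        destruct (ind_spec _ _ _ n) as [X Y]. rewrite (key _ _ _ X Y D) in E1; easy.
    + assert ((S P (fun p => ind p q r) <= 1)%nat); [|lia].
      apply S_uniq; [auto| intros; apply ind_le |].
      intros x y _ _ Hx Hy. apply ind_spec in Hx, Hy. destruct Hx, Hy. eapply uniq_p; eauto.
  - rewrite S_add, S_const.
    assert ((S P (fun r => if Req_EM_T (fst (r0 q)) (fst r) then
      if Req_EM_T (snd (r0 q)) (snd r) then length P else 0 else 0) <= length P * 1)%nat); [|lia].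
    assert (H : (S P (fun r => if Req_EM_T (fst (r0 q)) (fst r) then
      if Req_EM_T (snd (r0 q)) (snd r) then 1 else 0 else 0) <= 1)%nat).
    { apply S_uniq; auto.
      - intros; dR; lia.
      - intros [x1 x2] [y1 y2] _ _; simpl; dR; try lia; intros; f_equal; congruence. }
    apply Nat.le_trans with (S P (fun r => length P * (if Req_EM_T (fst (r0 q)) (fst r) then
      if Req_EM_T (snd (r0 q)) (snd r) then 1 else 0 else 0))%nat).
    + apply S_le; intros; dR; lia.
    + rewrite S_mul. nia.
Qed.

End Main.

Theorem theorem1 (alpha beta : R) (ha : alpha <> 0) (hb : beta <> 0) :
  exists C N : R, 0 < C /\ 0 < N /\
    forall (n : nat) (P : list pt),
      INR n > N -> NoDup P -> length P = n ->
      INR (length (Pi alpha beta P)) <= C * INR n ^ 2.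
Proof.
  exists 2, 1. split; [lra|split;[lra|]].
  intros n P _ ND HL.
  assert (H : (length (Pi alpha beta P) <= n * (2 * n))%nat).
  { rewrite len_Pi. rewrite S_exch.
    rewrite (S_ext P _ (fun q => S P (fun r => S P (fun p => ind alpha beta p q r)))).
    2:{ intros q _. apply S_exch. }
    rewrite <- HL. rewrite <- S_const. apply S_le. intros q _.
    apply bound_q; auto. }
  apply le_INR in H. rewrite mult_INR, mult_INR in H. simpl in H |- *. lra.
Qed.
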